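(* Consider the NSGA-II with population size $N\ge 4(n+1)$ optimizing \textsc{LeadingOnesTrailingZeroes} (with any way of generating offspring). If in some iteration $t$ the combined population $R_t=P_t\cup Q_t$ contains an individual $x$ of rank one (in the non-dominated sorting of $R_t$), then $P_{t+1}$ contains an individual $y$ with $f(y)=f(x)$. In particular, if $P_t$ contains an individual with objective value $(k,n-k)$ for some $k\in\{0,\dots,n\}$, then so does $P_s$ for every $s\ge t$.
   Context: Search space $\{0,1\}^n$; objective $f=(f_1,f_2):\{0,1\}^n\to\mathbb{R}^2$, both objectives maximized. $x$ strictly dominates $y$ if $f_1(x)\ge f_1(y)$, $f_2(x)\ge f_2(y)$ and at least one inequality is strict. Populations are multisets of bit strings; for a population $P$, $f(P)=\{f(x):x\in P\}$. Non-dominated sorting of a population $S$: $F_1$ is the set of individuals of $S$ not strictly dominated by any individual of $S$; inductively, $F_{k+1}$ is the set of individuals of $S\setminus(F_1\cup\dots\cup F_k)$ not strictly dominated by any individual of $S\setminus(F_1\cup\dots\cup F_k)$; the rank of $x$ in $S$ is the $k$ with $x\in F_k$. Crowding distance of the individuals of a set $S$ (computed with respect to $S$): start with $\mathrm{cDis}(x)=0$ for all $x\in S$; for each $i\in\{1,2\}$, sort $S$ in ascending $f_i$-value as $S_{i.1},\dots,S_{i.|S|}$ (ties broken arbitrarily), set $\mathrm{cDis}(S_{i.1})=\mathrm{cDis}(S_{i.|S|})=+\infty$, and for $2\le j\le |S|-1$ add $\frac{f_i(S_{i.j+1})-f_i(S_{i.j-1})}{f_i(S_{i.|S|})-f_i(S_{i.1})}$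 to $\mathrm{cDis}(S_{i.j})$ (if $f_i$ is constant on $S$, these summands are taken to be $0$). The NSGA-II with population size $N$: $P_0$ consists of $N$ independent uniformly random bit strings; in iteration $t=0,1,2,\dots$ it generates an offspring population $Q_t$ of $N$ individuals, sets $R_t=P_t\cup Q_t$ (multiset union, $2N$ individuals), computes the fronts $F_1,F_2,\dots$ of $R_t$, lets $i^*$ be minimal with $\sum_{i\le i^*}|F_i|\ge N$, computes the crowding distance of each individual of $F_i$ ($i\le i^*$) with respect to $F_i$, and sets $P_{t+1}=F_1\cup\dots\cup F_{i^*-1}\cup\tilde F_{i^*}$, where $\tilde F_{i^*}$ consists of the $N-\sum_{i<i^*}|F_i|$ individuals of $F_{i^*}$ with largest crowding distance, ties broken uniformly at random. \textsc{LeadingOnesTrailingZeroes}: $f(x)=\left(\sum_{i=1}^n\prod_{j=1}^i x_j,\ \sum_{i=1}^n\prod_{j=i}^n(1-x_j)\right)$ (number of leading ones, number of trailing zeros). Its Pareto front is $\{(k,n-k):k\in\{0,\dots,n\}\}$. *)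

(* Defs.v *)
From mathcomp Require Import all_boot all_order all_algebra.
Set Implicit Arguments. Unset Strict Implicit. Unset Printing Implicit Defensive.
Import Order.TTheory GRing.Theory Num.Theory.

Definition bitstring (n : nat) := n.-tuple bool.
Definition bs0 (n : nat) : bitstring n := nseq_tuple n false.

Definition LO (n : nat) (x : bitstring n) : nat :=
  \sum_(i < n) \prod_(j < n | (j <= i)%N) (tnth x j : nat).
Definition TZ (n : nat) (x : bitstring n) : nat :=
  \sum_(i < n) \prod_(j < n | (i <= j)%N) ((~~ tnth x j) : nat).
Definition lotz (n : nat) (x : bitstring n) : nat * nat := (LO x, TZ x).

Definition sdom (a b : nat * nat) : bool :=
  [&& (b.1 <= a.1)%N, (b.2 <= a.2)%N & ((b.1 < a.1)%N || (b.2 < a.2)%N)].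

Section Sorting.
(* Individuals of the combined population are indexed by 'I_m (multiset
   semantics: equal bit strings at different indices are distinct
   individuals); fv gives their objective values. *)
Variables (m : nat) (fv : 'I_m -> nat * nat).

Definition nondom_in (A : {set 'I_m}) : {set 'I_m} :=
  [set i in A | [forall j in A, ~~ sdom (fv j) (fv i)]].

Fixpoint remaining (k : nat) : {set 'I_m} :=
  match k with
  | 0 => setT
  | k'.+1 => remaining k' :\: nondom_in (remaining k')
  end.

(* front k = F_{k+1} (0-indexed) *)
Definition front (k : nat) : {set 'I_m} := nondom_in (remaining k).

Definition cum (k : nat) : nat := #|\bigcup_(j < k) front j|.

Definition is_sorting (g : 'I_m -> nat) (F : {set 'I_m}) (s : seq 'I_m) : Prop :=
  perm_eq s (enum F) /\ sorted (fun a b => (g a <= g b)%N) s.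

(* contribution of one objective to the crowding distance;
   None encodes +infinity *)
Definition cd_part (g : 'I_m -> nat) (s : seq 'I_m) (x : 'I_m) : option rat :=
  let j := index x s in
  if (j == 0)%N || (j == (size s).-1) then None
  else
    let gfirst := g (nth x s 0) in
    let glast := g (nth x s (size s).-1) in
    Some (if glast == gfirst then 0%R
          else (((g (nth x s j.+1))%:R - (g (nth x s j.-1))%:R)
                / ((glast)%:R - (gfirst)%:R))%R).

Definition cdist (s1 s2 : seq 'I_m) (x : 'I_m) : option rat :=
  match cd_part (fun i => (fv i).1) s1 x, cd_part (fun i => (fv i).2) s2 x with
  | Some a, Some b => Some (a + b)%R
  | _, _ => None
  end.

Definition cd_le (a b : option rat) : bool :=
  match a, b with
  | _, None => true
  | None, Some _ => false
  | Some a, Some b => (a <= b)%R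
  end.

End Sorting.

Definition objv (n : nat) (R : seq (bitstring n)) (i : 'I_(size R)) : nat * nat :=
  lotz (nth (bs0 n) R i).
Arguments objv {n} R i.

(* Pn is a possible outcome of the NSGA-II survival selection of N
   individuals out of the combined population R (over all choices of
   tie-breaking in the sortings and in the crowding-distance selection). *)
Definition nsga_survivors (n N : nat) (R : seq (bitstring n)) (Pn : seq (bitstring n)) : Prop :=
  exists k : nat,
    (N <= cum (objv R) k.+1)%N /\ (forall j, (j < k)%N -> (cum (objv R) j.+1 < N)%N) /\
    exists s1 s2 : seq 'I_(size R),
      is_sorting (fun i => (objv R i).1) (front (objv R) k) s1 /\
      is_sorting (fun i => (objv R i).2) (front (objv R) k) s2 /\
      exists T : {set 'I_(size R)},
        T \subset front (objv R) k /\
        #|T| = (N - cum (objv R) k)%N /\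
        (forall a b, a \in T -> b \in front (objv R) k :\: T ->
           cd_le (cdist (objv R) s1 s2 b) (cdist (objv R) s1 s2 a)) /\
        perm_eq Pn [seq nth (bs0 n) R i
                   | i : 'I_(size R) <- enum ((\bigcup_(j < k) front (objv R) j) :|: T)].

Definition nsga_step (n N : nat) (P Q Pn : seq (bitstring n)) : Prop :=
  size P = N /\ size Q = N /\ nsga_survivors N (P ++ Q) Pn.

(* Main.v *)
Require Import Defs.
From mathcomp Require Import all_boot all_order all_algebra zify lra.
Import Order.TTheory GRing.Theory Num.Theory.

Lemma prod_le1 (n : nat) (P : pred 'I_n) (F : 'I_n -> nat) :
  (forall j, F j <= 1) -> \prod_(j < n | P j) F j <= 1.
Proof.
move=> H; apply: (big_ind (fun v => v <= 1)) => // a b ha hb.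
by rewrite -(muln1 1); apply: leq_mul.
Qed.

Lemma LOTZ_le (n : nat) (x : bitstring n) : LO x + TZ x <= n.
Proof.
rewrite /LO /TZ -big_split /=.
rewrite -[X in _ <= X]card_ord -sum1_card.
apply: leq_sum => i _.
have h1 : \prod_(j < n | j <= i) (tnth x j : nat) <= tnth x i.
  rewrite (bigD1 i) //=.
  rewrite -[X in _ <= X]muln1; apply: leq_mul => //.
  by apply: prod_le1 => j; case: (tnth x j).
have h2 : \prod_(j < n | i <= j) ((~~ tnth x j) : nat) <= ~~ tnth x i.
  rewrite (bigD1 i) //=.
  rewrite -[X in _ <= X]muln1; apply: leq_mul => //.
  by apply: prod_le1 => j; case: (tnth x j).
by move: h1 h2; case: (tnth x i) => /=; lia.
Qed.

Set Implicit Arguments.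
Unset Strict Implicit.

Section CD.
Variables (m : nat) (g : 'I_m -> nat) (s : seq 'I_m).
Hypothesis hs : sorted (fun a b => g a <= g b) s.

Definition Lset : {set 'I_m} :=
  [set b | (b \in s) && ((index b s == 0) || (g (nth b s (index b s).-1) < g b))].
Definition Rset : {set 'I_m} :=
  [set b | (b \in s) && ((index b s == (size s).-1) || (g b < g (nth b s (index b s).+1)))].

Lemma mono (x0 : 'I_m) i j : i <= j -> j < size s -> g (nth x0 s i) <= g (nth x0 s j).
Proof.
move=> hij hj.
have := @sorted_leq_nth _ (fun a b => g a <= g b) _ _ x0 s hs i j.
apply.
- by move=> a b c; apply: leq_trans.
- by move=> a.
- by rewrite inE; apply: leq_ltn_trans hj.
- by rewrite inE.
- done.
Qed.

Lemma inj_gL b b' : b \in Lset -> b' \in Lset -> g b = g b' -> b = b'.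
Proof.
rewrite !inE => /andP[bs hb] /andP[b's hb'] e.
have jb : index b s < size s by rewrite index_mem.
have jb' : index b' s < size s by rewrite index_mem.
have Eb := nth_index b bs; have Eb' := nth_index b b's.
have Eb'' := nth_index b' b's.
move: hb hb' jb jb' Eb Eb' Eb''.
set j := index b s; set j' := index b' s => hb hb' jb jb' Eb Eb' Eb''.
case: (ltngtP j j') => h.
- move: hb'; rewrite (_ : j' == 0 = false); last by apply/eqP; lia.
  have -> : nth b' s j'.-1 = nth b s j'.-1 by apply: set_nth_default; (suff hh : j'.-1 < size s by exact: hh); lia.
  have := @mono b j j'.-1; rewrite Eb => H.
  rewrite -e /=.
  have HH := H ltac:(lia) ltac:(lia).
  move: HH; lia.
- move: hb; rewrite (_ : j == 0 = false); last by apply/eqP; lia.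
  have := @mono b j' j.-1; rewrite Eb' => H.
  rewrite e /=.
  have HH := H ltac:(lia) ltac:(lia).
  move: HH; lia.
- by rewrite -Eb h Eb'.
Qed.

Lemma inj_gR b b' : b \in Rset -> b' \in Rset -> g b = g b' -> b = b'.
Proof.
rewrite !inE => /andP[bs hb] /andP[b's hb'] e.
have jb : index b s < size s by rewrite index_mem.
have jb' : index b' s < size s by rewrite index_mem.
have Eb := nth_index b bs; have Eb' := nth_index b b's.
have Eb'' := nth_index b' b's.
move: hb hb' jb jb' Eb Eb' Eb''.
set j := index b s; set j' := index b' s => hb hb' jb jb' Eb Eb' Eb''.
case: (ltngtP j j') => h.
- move: hb; rewrite (_ : j == (size s).-1 = false); last by apply/eqP; lia.
  have := @mono b j.+1 j'; rewrite Eb' => H.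
  rewrite e /=.
  have HH := H ltac:(lia) ltac:(lia).
  move: HH; lia.
- move: hb'; rewrite (_ : j' == (size s).-1 = false); last by apply/eqP; lia.
  have -> : nth b' s j'.+1 = nth b s j'.+1 by apply: set_nth_default; (suff hh : j'.+1 < size s by exact: hh); lia.
  have := @mono b j'.+1 j; rewrite Eb => H.
  rewrite -e /=.
  have HH := H ltac:(lia) ltac:(lia).
  move: HH; lia.
- by rewrite -Eb h Eb'.
Qed.

Lemma card_inj (n : nat) (A : {set 'I_m}) : (forall b, g b <= n) ->
  {in A &, forall b b', g b = g b' -> b = b'} -> #|A| <= n.+1.
Proof.
move=> hg hinj.
rewrite -(@card_in_imset _ _ (fun b => (inord (g b) : 'I_n.+1)) A).
  by apply: leq_trans (max_card _) _; rewrite card_ord.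
move=> b b' hb hb' /= e; apply: hinj => //.
by move: (congr1 val e); rewrite /= !inordK // ltnS.
Qed.

Definition posd (o : option rat) := match o with None => true | Some r => (0 < r)%R end.
Definition nnegd (o : option rat) := match o with None => true | Some r => (0 <= r)%R end.

Lemma part_zero b : b \in s -> b \notin Lset -> b \notin Rset -> cd_part g s b = Some 0%R.
Proof.
move=> bs; rewrite !inE bs /= !negb_or => /andP[n0 nL] /andP[nl nR].
have jb : index b s < size s by rewrite index_mem.
have Eb := nth_index b bs.
move: n0 nL nl nR jb Eb; rewrite /cd_part.
set j := index b s => n0 nL nl nR jb Eb.
rewrite (negbTE n0) (negbTE nl) /=.
have h1 := @mono b j.-1 j ltac:(lia) jb.
have h2 := @mono b j j.+1 ltac:(lia) ltac:(lia).
rewrite Eb in h1 h2.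
have E : g (@nth 'I_m b s j.+1) = g (@nth 'I_m b s j.-1) by move: nL nR; lia.
rewrite E subrr mul0r; by case: ifP.
Qed.

Lemma part_nneg b : b \in s -> nnegd (cd_part g s b).
Proof.
move=> bs.
have jb : index b s < size s by rewrite index_mem.
rewrite /cd_part; move: jb; set j := index b s => jb.
case: ifP => //= /norP[n0 nl]; case: ifP => // _.
have h1 := @mono b j.-1 j.+1 ltac:(lia) ltac:(move: n0 nl; lia).
have h2 := @mono b 0 (size s).-1 ltac:(lia) ltac:(lia).
apply: divr_ge0; rewrite subr_ge0 ler_nat //.
Qed.

Lemma part_pos b : b \in Lset -> posd (cd_part g s b).
Proof.
rewrite inE => /andP[bs hL].
have jb : index b s < size s by rewrite index_mem.
have Eb := nth_index b bs.
move: hL jb Eb; rewrite /cd_part.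
set j := index b s => hL jb Eb.
case: ifP => //= /norP[n0 nl].
rewrite (negbTE n0) /= in hL.
have h1 := @mono b j j.+1 ltac:(lia) ltac:(move: n0 nl; lia).
have h2 := @mono b 0 j.-1 ltac:(lia) ltac:(lia).
have h3 := @mono b j.+1 (size s).-1 ltac:(move: n0 nl; lia) ltac:(lia).
rewrite Eb in h1.
case: ifP => [/eqP|_]; first by move: h1 h2 h3 hL; lia.
apply: divr_gt0; rewrite subr_gt0 ltr_nat; lia.
Qed.
End CD.

Unset Implicit Arguments. Set Strict Implicit.

Lemma cardU_le (T : finType) (A B : {set T}) : #|A :|: B| <= #|A| + #|B|.
Proof. by rewrite cardsU leq_subr. Qed.

Lemma objv_le n (R : seq (bitstring n)) b : (objv R b).1 <= n /\ (objv R b).2 <= n.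
Proof. have := @LOTZ_le n (nth (bs0 n) R b); rewrite /objv /lotz /=; lia. Qed.

Lemma arith a b c d e f g h N n : N.+1 <= a -> a <= b -> b <= c + d -> c <= e + f ->
  d <= g + h -> e <= n.+1 -> f <= n.+1 -> g <= n.+1 -> h <= n.+1 -> 4 * (n + 1) <= N -> False.
Proof. lia. Qed.

Lemma part1 n N (hN : (4 * (n + 1) <= N)%N) (P Q Pn : seq (bitstring n)) :
  nsga_step N P Q Pn ->
     forall i : 'I_(size (P ++ Q)), i \in front (objv (P ++ Q)) 0 ->
       exists2 y, y \in Pn & lotz y = lotz (nth (bs0 n) (P ++ Q) i).
Proof.
move=> [_ [_ [k [hk1 [hk2 [s1 [s2 [hs1 [hs2 [T [hT [hTc [hcd hPn]]]]]]]]]]]]] i hi.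
move: hk1 hk2 s1 s2 hs1 hs2 T hT hTc hcd hPn i hi.
set R := P ++ Q; set fv := objv R => hk1 hk2 s1 s2 hs1 hs2 T hT hTc hcd hPn i hi.
have inPn : forall b, b \in (\bigcup_(j < k) front fv j) :|: T -> nth (bs0 n) R b \in Pn.
  move=> b hb; rewrite (perm_mem hPn); apply/mapP; exists b => //; by rewrite mem_enum.
case: k hk1 hk2 s1 s2 hs1 hs2 T hT hTc hcd hPn inPn => [|k] hk1 hk2 s1 s2 hs1 hs2 T hT hTc hcd hPn inPn; last first.
  exists (nth (bs0 n) R i) => //; apply: inPn; apply/setUP; left.
  by apply/bigcupP; exists ord0.
rewrite /cum big_ord0 cards0 subn0 in hTc.
have inPn0 : forall b, b \in T -> nth (bs0 n) R b \in Pn.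
  by move=> b hb; apply: inPn; rewrite big_ord0 set0U.
set Fr := front fv 0 in hi hs1 hs2 hT hcd.
set g1 := fun b => (fv b).1; set g2 := fun b => (fv b).2.
have [ps1 so1] := hs1; have [ps2 so2] := hs2.
have us1 : uniq s1 by rewrite (perm_uniq ps1) enum_uniq.
have mem1 : forall b, (b \in s1) = (b \in Fr) by move=> b; rewrite (perm_mem ps1) mem_enum.
have mem2 : forall b, (b \in s2) = (b \in Fr) by move=> b; rewrite (perm_mem ps2) mem_enum.
have nd : forall b c, b \in Fr -> c \in Fr -> g1 b = g1 c -> fv b = fv c.
  move=> b c; rewrite /Fr /front /= /nondom_in !inE /= => /forallP hb /forallP hc e.
  have := hb c; have := hc b; rewrite !inE /= /sdom /g1 in e *.
  move: e; case: (fv b) => b1 b2; case: (fv c) => c1 c2 /= e.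
  move=> h1 h2; congr pair => //; lia.
set p := fun b => g1 b == g1 i.
have hasp : has p s1 by apply/hasP; exists i; rewrite ?mem1 // /p.
set j := find p s1.
have js : j < size s1 by rewrite -has_find.
set a := nth i s1 j.
have pa : p a := nth_find i hasp.
have as1 : a \in s1 by apply: mem_nth.
have aF : a \in Fr by rewrite -mem1.
have fa : fv a = fv i by apply: nd => //; apply/eqP.
have ia : index a s1 = j by rewrite /a index_uniq.
have aL : a \in Lset g1 s1.
  rewrite inE as1 ia /=.
  case: (posnP j) => [->//|jp]; apply/orP; right.
  have hb : p (nth i s1 j.-1) = false by apply: before_find; rewrite ltn_predL.
  move: hb; rewrite /p.
  have hm := @mono _ _ _ so1 i (j.-1) j (leq_pred _) js.
  have ea : g1 a = g1 i := eqP pa.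
  have -> : nth a s1 j.-1 = nth i s1 j.-1 by apply: set_nth_default; exact: leq_ltn_trans (leq_pred _) js.
  move=> /negbT h2; rewrite ea ltn_neqAle h2 /= -ea; exact: hm.
have pa' : posd (cdist fv s1 s2 a).
  have as2 : a \in s2 by rewrite mem2.
  move: (part_pos so1 aL) (part_nneg so2 as2); rewrite /cdist /=.
  case: (cd_part _ s1 a) => [r1|]; case: (cd_part _ s2 a) => [r2|] //=.
  move=> h1 h2; lra.
case: (boolP (has (fun y => lotz y == lotz (nth (bs0 n) R i)) Pn)) => [/hasP[y hy /eqP e]|hno].
  by exists y.
exfalso.
have aT : a \notin T.
  apply/negP => hat; move/hasP: hno; apply; exists (nth (bs0 n) R a); first exact: inPn0.
  by apply/eqP; move: fa; rewrite /fv /objv.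
have posT : forall b, b \in T -> posd (cdist fv s1 s2 b).
  move=> b hb; have := hcd b a hb; rewrite in_setD aT aF => /(_ isT).
  move: pa'; case: (cdist fv s1 s2 a) => [q|]; case: (cdist fv s1 s2 b) => [r|] //=.
  move=> hq hqr; exact: lt_le_trans hq hqr.
set Pos := [set b in Fr | posd (cdist fv s1 s2 b)].
have sub1 : a |: T \subset Pos.
  apply/subsetP => b; rewrite in_setU1 => /orP[/eqP->|hb]; first by rewrite /Pos in_set aF pa'.
  by rewrite /Pos in_set posT // (subsetP hT).
have sub2 : Pos \subset (Lset g1 s1 :|: Rset g1 s1) :|: (Lset g2 s2 :|: Rset g2 s2).
  apply/subsetP => b; rewrite /Pos in_set => /andP[bF pb].
  apply/negPn/negP; rewrite !in_setU !negb_or => /andP[/andP[n1 n2] /andP[n3 n4]].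
  have bs1 : b \in s1 by rewrite mem1.
  have bs2 : b \in s2 by rewrite mem2.
  move: pb; rewrite /cdist.
  have -> : cd_part (fun i0 => (fv i0).1) s1 b = Some 0%R.
    exact: (part_zero so1 bs1).
  have -> : cd_part (fun i0 => (fv i0).2) s2 b = Some 0%R.
    exact: (part_zero so2 bs2).
  by rewrite /= addr0 ltxx.
have c1 := subset_leq_card sub1.
have c2 := subset_leq_card sub2.
rewrite cardsU1 aT hTc in c1.
have hg1 : forall b, g1 b <= n by move=> b; case: (@objv_le n R b).
have hg2 : forall b, g2 b <= n by move=> b; case: (@objv_le n R b).
have L1 := card_inj hg1 (inj_gL so1).
have R1 := card_inj hg1 (inj_gR so1).
have L2 := card_inj hg2 (inj_gL so2).
have R2 := card_inj hg2 (inj_gR so2).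
have u1 := @cardU_le _ (Lset g1 s1 :|: Rset g1 s1) (Lset g2 s2 :|: Rset g2 s2).
have u2 := @cardU_le _ (Lset g1 s1) (Rset g1 s1).
have u3 := @cardU_le _ (Lset g2 s2) (Rset g2 s2).
rewrite add1n in c1. exact (@arith _ _ _ _ _ _ _ _ _ _ c1 c2 u1 u2 u3 L1 R1 L2 R2 hN).
Qed.

Theorem lemma7 (n N : nat) (hN : (4 * (n + 1) <= N)%N) :
  (forall P Q Pn : seq (bitstring n), nsga_step N P Q Pn ->
     forall i : 'I_(size (P ++ Q)), i \in front (objv (P ++ Q)) 0 ->
       exists2 y, y \in Pn & lotz y = lotz (nth (bs0 n) (P ++ Q) i))
  /\
  (forall (pop off : nat -> seq (bitstring n)),
     (forall t, nsga_step N (pop t) (off t) (pop t.+1)) ->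
     forall (t k : nat), (k <= n)%N ->
       (exists2 x, x \in pop t & lotz x = (k, n - k)) ->
       forall s, (t <= s)%N -> exists2 y, y \in pop s & lotz y = (k, n - k)).
Proof.
split; first by move=> P Q Pn h; exact: (@part1 n N hN P Q Pn h).
move=> pop off hstep t k hk hx0.
have step : forall u, (exists2 y, y \in pop u & lotz y = (k, n - k)) ->
    exists2 y, y \in pop u.+1 & lotz y = (k, n - k).
  move=> u [y hy ey].
  have yR : y \in pop u ++ off u by rewrite mem_cat hy.
  have hidx : index y (pop u ++ off u) < size (pop u ++ off u) by rewrite index_mem.
  pose i : 'I_(size (pop u ++ off u)) := Ordinal hidx.
  have hi : i \in front (objv (pop u ++ off u)) 0.
    rewrite /front /= /nondom_in !inE /=; apply/forallP => j; apply/implyP => _.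
    rewrite /objv /= nth_index // ey /sdom /=.
    have := @LOTZ_le n (nth (bs0 n) (pop u ++ off u) j).
    rewrite /lotz /=; lia.
  have [y' hy' e'] := @part1 n N hN _ _ _ (hstep u) i hi.
  by exists y' => //; rewrite e' /= nth_index.
elim=> [|s IH] ts.
  have E : t = 0 by lia.
  by move: hx0; rewrite E.
case: (ltngtP t s.+1) => h; last by move: hx0; rewrite h.
- by apply: step; apply: IH; lia.
- lia.
Qed.
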